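(* Let $A,B,\beta,\xi_0>0$ and let $\{w_n\}_{n\ge0}$ be functions $w_n\colon[\xi_0,\infty)\to[0,1]$ with $w_{n+1}(\xi)\le w_n(\xi)$ for all $n,\xi$. Suppose $w_0$ decays rapidly in $\xi$ and that $$w_{n+N}(\xi)\le(1-A\xi^{-\beta})w_n(\xi)\quad\text{for all } n\ge0,\ \xi\ge\xi_0 \text{ and all integers } N>B\log\xi.$$ Then the sequence $s_n=\sup_{\xi\ge\xi_0}w_n(\xi)$ decays rapidly in $n$.
   Context: A function $w\colon D\subseteq(0,\infty)\to\mathbb R$ decays rapidly in $\xi$ if for each $\ell\ge1$ there is $C$ with $|w(\xi)|\le C\xi^{-\ell}$ for all $\xi\in D$. A sequence $\{s_n\}$ decays rapidly in $n$ if for each $\ell\ge1$ there is $C$ with $|s_n|\le Cn^{-\ell}$ for all $n\ge1$. *)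

(* Defs.v *)
From Stdlib Require Import Reals.
From Coquelicot Require Import Coquelicot.
Open Scope R_scope.

Definition decays_rapidly_fun (D : R -> Prop) (w : R -> R) : Prop :=
  forall l : nat, (1 <= l)%nat ->
    exists C : R, forall xi : R, D xi -> Rabs (w xi) <= C * / (xi ^ l).

Definition decays_rapidly_seq (s : nat -> R) : Prop :=
  forall l : nat, (1 <= l)%nat ->
    exists C : R, forall n : nat, (1 <= n)%nat -> Rabs (s n) <= C * / (INR n ^ l).

(* sup_{xi >= xi0} f xi, as the real part of Coquelicot's least upper bound
   in the extended reals (finite whenever f is bounded on [xi0,oo)). *)
Definition sup_from (xi0 : R) (f : R -> R) : R :=
  real (Lub_Rbar (fun y => exists xi, xi0 <= xi /\ y = f xi)).

(* Main.v *)
Require Import Defs.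
From Stdlib Require Import Reals Lra Lia ZArith.
From Coquelicot Require Import Coquelicot.
Open Scope R_scope.

Lemma nat_between (x : R) : 0 <= x -> exists N : nat, x < INR N <= x + 1.
Proof.
  intros hx. destruct (archimed x) as [h1 h2].
  assert (hz : (0 <= up x)%Z).
  { apply le_IZR. lra. }
  exists (Z.to_nat (up x)). rewrite INR_IZR_INZ, Z2Nat.id by exact hz. lra.
Qed.

Lemma nat_above (x : R) : exists N : nat, x < INR N.
Proof.
  destruct (nat_between (Rabs x)) as [N [h1 _]]. apply Rabs_pos.
  exists N. pose proof (Rle_abs x). lra.
Qed.

Lemma exp_pow_nat (y : R) (k : nat) : exp y ^ k = exp (INR k * y).
Proof.
  induction k as [|k IH].
  - simpl. rewrite Rmult_0_l, exp_0. reflexivity.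
  - rewrite S_INR. simpl pow. rewrite IH. rewrite <- exp_plus. f_equal. ring.
Qed.

Lemma exp_lower (y : R) (m : nat) : 0 <= y -> (1 <= m)%nat -> (y / INR m) ^ m <= exp y.
Proof.
  intros hy hm.
  assert (hm' : 0 < INR m) by (apply lt_0_INR; lia).
  replace (exp y) with (exp (y / INR m) ^ m).
  2:{ rewrite exp_pow_nat. f_equal. field. lra. }
  apply pow_incr. split.
  - apply Rmult_le_pos; [lra| left; apply Rinv_0_lt_compat; lra].
  - destruct (Req_dec (y / INR m) 0) as [e|e].
    + rewrite e, exp_0; lra.
    + pose proof (exp_ineq1 _ e). lra.
Qed.

Lemma ln_lt_self (u : R) : 0 < u -> ln u < u.
Proof.
  intros hu. destruct (Req_dec (ln u) 0) as [e|e].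
  - lra.
  - pose proof (exp_ineq1 _ e). rewrite exp_ln in H by lra. lra.
Qed.

Lemma sup_bound (xi0 M : R) (f : R -> R) :
  (forall xi, xi0 <= xi -> 0 <= f xi <= M) ->
  Rabs (real (Lub_Rbar (fun y => exists xi, xi0 <= xi /\ y = f xi))) <= M.
Proof.
  intros hf.
  destruct (Lub_Rbar_correct (fun y => exists xi, xi0 <= xi /\ y = f xi)) as [hub hl].
  assert (h1 : Rbar_le (Lub_Rbar (fun y => exists xi, xi0 <= xi /\ y = f xi)) (Finite M)).
  { apply hl. intros y [xi [hxi ->]]. simpl. apply hf; auto. }
  assert (h2 : Rbar_le (Finite (f xi0)) (Lub_Rbar (fun y => exists xi, xi0 <= xi /\ y = f xi))).
  { apply hub. exists xi0. split; [lra|reflexivity]. }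
  destruct (Lub_Rbar (fun y => exists xi, xi0 <= xi /\ y = f xi)) as [r| |];
    simpl in *; try contradiction.
  pose proof (hf xi0 (Rle_refl _)). rewrite Rabs_pos_eq; lra.
Qed.

Lemma exp_le_mono (x y : R) : x <= y -> exp x <= exp y.
Proof. intros h. destruct h as [h|h]. left; apply exp_increasing; exact h. subst; lra. Qed.

Theorem proposition7p2 (A B beta xi0 : R) (w : nat -> R -> R)
  (hA : 0 < A) (hB : 0 < B) (hbeta : 0 < beta) (hxi0 : 0 < xi0)
  (hrange : forall n xi, xi0 <= xi -> 0 <= w n xi <= 1)
  (hmono : forall n xi, xi0 <= xi -> w (S n) xi <= w n xi)
  (hw0 : decays_rapidly_fun (fun xi => xi0 <= xi) (w O))
  (hstep : forall (n N : nat) (xi : R), xi0 <= xi -> B * ln xi < INR N ->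
      w (n + N)%nat xi <= (1 - A * Rpower xi (- beta)) * w n xi) :
  decays_rapidly_seq (fun n => sup_from xi0 (w n)).
Proof.
  assert (hmon : forall m n xi, (m <= n)%nat -> xi0 <= xi -> w n xi <= w m xi).
  { intros m n xi hmn hxi. induction hmn as [|n hmn IH]. lra.
    pose proof (hmono n xi hxi). lra. }
  intros l hl.
  set (delta := / (2 * beta)).
  assert (hdelta : 0 < delta) by (unfold delta; apply Rinv_0_lt_compat; lra).
  destruct (nat_above (2 * beta * INR l)) as [L0 hL0].
  set (L := S L0).
  assert (hL : (1 <= L)%nat) by (unfold L; lia).
  assert (hLr : INR l <= delta * INR L).
  { unfold L. rewrite S_INR. unfold delta.
    apply (Rmult_le_reg_l (2 * beta)). lra.
    rewrite <- Rmult_assoc, Rinv_r by lra. lra. }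
  destruct (hw0 L hL) as [C0 hC0].
  assert (hC0pos : 0 <= C0).
  { pose proof (hC0 xi0 (Rle_refl _)).
    pose proof (Rabs_pos (w O xi0)).
    assert (0 < / xi0 ^ L) by (apply Rinv_0_lt_compat, pow_lt; lra).
    nra. }
  set (m := (4 * l)%nat).
  assert (hm : (1 <= m)%nat) by (unfold m; lia).
  set (c := 4 * B * delta + 1).
  assert (hc : 1 <= c) by (unfold c; nra).
  set (a := A / c).
  assert (ha : 0 < a) by (unfold a; apply Rdiv_lt_0_compat; lra).
  set (K := exp A * (INR m / a) ^ m).
  assert (hK : 0 <= K).
  { unfold K. apply Rmult_le_pos. left; apply exp_pos.
    apply pow_le. apply Rmult_le_pos. apply pos_INR. left; apply Rinv_0_lt_compat; lra. }
  exists (C0 + K). intros n hn.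
  assert (hnr : 1 <= INR n) by (apply (le_INR 1); lia).
  assert (hnl : 0 < INR n ^ l) by (apply pow_lt; lra).
  assert (hinv : 0 < / INR n ^ l) by (apply Rinv_0_lt_compat; lra).
  unfold sup_from. apply sup_bound. intros xi hxi.
  split. apply hrange; lra.
  assert (hxipos : 0 < xi) by lra.
  set (T := Rpower (INR n) delta).
  assert (hT : 0 < T) by (unfold T, Rpower; apply exp_pos).
  destruct (Rle_lt_dec T xi) as [hTx | hTx].
  -
    assert (hpow : INR n ^ l <= xi ^ L).
    { apply Rle_trans with (T ^ L).
      + rewrite <- (Rpower_pow L T hT). unfold T. rewrite Rpower_mult.
        rewrite <- (Rpower_pow l (INR n)) by lra.
        apply Rle_Rpower; lra.
      + apply pow_incr. lra. }
    apply Rle_trans with (w O xi). apply hmon; [lia|lra].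
    apply Rle_trans with (C0 * / xi ^ L).
    { pose proof (hC0 xi hxi). pose proof (Rle_abs (w O xi)). lra. }
    apply Rle_trans with (C0 * / INR n ^ l).
    { apply Rmult_le_compat_l. lra. apply Rinv_le_contravar; lra. }
    nra.
  -
    set (u := Rpower (INR n) (/ 4)).
    assert (hu1 : 1 <= u).
    { rewrite <- (Rpower_O (INR n)) by lra. unfold u. apply Rle_Rpower; lra. }
    assert (hn4 : INR n = u ^ 4).
    { rewrite <- (Rpower_pow 4 u) by lra. unfold u. rewrite Rpower_mult.
      replace (/ 4 * INR 4) with 1 by (simpl; field). rewrite Rpower_1; lra. }
    assert (hu2 : Rpower xi beta <= u ^ 2).
    { apply Rle_trans with (Rpower T beta).
      apply Rle_Rpower_l; lra.
      rewrite <- (Rpower_pow 2 u) by lra. unfold u, T. rewrite !Rpower_mult.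
      replace (delta * beta) with (/ 4 * INR 2). lra.
      unfold delta. simpl. field. lra. }
    assert (hlnn : ln (INR n) = 4 * ln u).
    { rewrite hn4, ln_pow by lra. simpl. ring. }
    assert (hlnu : 0 <= ln u).
    { rewrite <- ln_1. apply ln_le; lra. }
    assert (hlnu2 : ln u < u) by (apply ln_lt_self; lra).
    set (x := B * delta * ln (INR n)).
    assert (hx : 0 <= x).
    { unfold x. rewrite hlnn. apply Rmult_le_pos. nra. lra. }
    destruct (nat_between x hx) as [N [hN1 hN2]].
    assert (hNpos : 0 < INR N) by lra.
    assert (hN0 : N <> 0%nat) by (intro e; subst N; simpl in hNpos; lra).
    assert (hNstep : B * ln xi < INR N).
    { assert (ln xi < delta * ln (INR n)).
      { rewrite <- ln_Rpower. apply ln_increasing; [lra|]. fold T. exact hTx. }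
      unfold x in hN1. nra. }
    assert (hNc : INR N <= c * u).
    { unfold x in hN2. rewrite hlnn in hN2. unfold c.
      assert (0 < B * delta) by nra. nra. }
    set (x' := A * Rpower xi (- beta)).
    assert (hRp : 0 < Rpower xi beta) by (unfold Rpower; apply exp_pos).
    assert (hx'pos : 0 < x').
    { unfold x'. rewrite Rpower_Ropp. apply Rmult_lt_0_compat; [lra|].
      apply Rinv_0_lt_compat; lra. }
    assert (hiter : forall k, w (N * k)%nat xi <= exp (- x') ^ k).
    { induction k as [|k IH].
      - rewrite Nat.mul_0_r. simpl. apply hrange; lra.
      - replace (N * S k)%nat with (N * k + N)%nat by lia.
        pose proof (hstep (N * k)%nat N xi hxi hNstep) as hs.
        fold x' in hs.
        assert (1 - x' <= exp (- x')).
        { assert (- x' <> 0) by lra. pose proof (exp_ineq1 _ H). lra. }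
        pose proof (hrange (N * k)%nat xi hxi).
        simpl pow.
        apply Rle_trans with ((1 - x') * w (N * k)%nat xi). exact hs.
        apply Rle_trans with (exp (- x') * w (N * k)%nat xi).
        apply Rmult_le_compat_r; lra.
        apply Rmult_le_compat_l. left; apply exp_pos. exact IH. }
    set (k := (n / N)%nat).
    assert (hkn : (N * k <= n)%nat) by (apply Nat.mul_div_le; exact hN0).
    assert (hk : INR n < INR N * INR k + INR N).
    { rewrite <- mult_INR, <- plus_INR. apply lt_INR.
      pose proof (Nat.div_mod n N hN0). pose proof (Nat.mod_upper_bound n N hN0).
      fold k in H. lia. }
    assert (hkpos : 0 <= INR k) by apply pos_INR.
    assert (hx'u : A / u ^ 2 <= x').
    { unfold x'. rewrite Rpower_Ropp. apply Rmult_le_compat_l. lra.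
      apply Rinv_le_contravar; lra. }
    assert (hkey : a * u - A <= INR k * x').
    { assert (hu3 : u ^ 3 < c * (INR k + 1)).
      { assert (u * u ^ 3 < u * (c * (INR k + 1))).
        { replace (u * u ^ 3) with (u ^ 4) by ring. rewrite <- hn4.
          apply Rlt_le_trans with (INR N * (INR k + 1)). lra.
          replace (u * (c * (INR k + 1))) with ((c * u) * (INR k + 1)) by ring.
          apply Rmult_le_compat_r; lra. }
        apply Rmult_lt_reg_l with u; lra. }
      assert (hu2pos : 0 < u ^ 2) by (apply pow_lt; lra).
      apply Rle_trans with (INR k * (A / u ^ 2)).
      2:{ apply Rmult_le_compat_l; lra. }
      assert (a * u <= (INR k + 1) * (A / u ^ 2)).
      { unfold a. unfold Rdiv.
        apply Rmult_le_reg_r with (c * u ^ 2). nra.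
        replace (A * / c * u * (c * u ^ 2)) with (A * u ^ 3) by (field; lra).
        replace ((INR k + 1) * (A * / u ^ 2) * (c * u ^ 2)) with (A * (c * (INR k + 1))) by (field; lra).
        apply Rmult_le_compat_l; lra. }
      assert (A / u ^ 2 <= A).
      { unfold Rdiv. rewrite <- (Rmult_1_r A) at 2. apply Rmult_le_compat_l. lra.
        rewrite <- Rinv_1. apply Rinv_le_contravar. lra. nra. }
      nra. }
    apply Rle_trans with (w (N * k)%nat xi). apply hmon; [exact hkn | lra].
    apply Rle_trans with (exp (- x') ^ k). apply hiter.
    rewrite exp_pow_nat.
    apply Rle_trans with (exp (A - a * u)).
    { apply exp_le_mono. lra. }
    assert (hunl : INR n ^ l = u ^ m).
    { rewrite hn4, <- pow_mult. reflexivity. }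
    assert (hau : 0 < (a * u / INR m) ^ m).
    { apply pow_lt. apply Rdiv_lt_0_compat. nra. apply lt_0_INR; lia. }
    apply Rle_trans with (K * / INR n ^ l).
    2:{ assert (0 <= C0 * / INR n ^ l) by nra. nra. }
    replace (A - a * u) with (A + - (a * u)) by ring.
    rewrite exp_plus, exp_Ropp.
    replace (K * / INR n ^ l) with (exp A * / (a * u / INR m) ^ m).
    2:{ unfold K. rewrite hunl. unfold Rdiv. rewrite !Rpow_mult_distr, !pow_inv. assert (INR m <> 0) by (apply not_0_INR; lia). field. split; [|split]; apply pow_nonzero; lra. }
    apply Rmult_le_compat_l. left; apply exp_pos.
    apply Rinv_le_contravar. exact hau.
    apply exp_lower. nra. exact hm.
Qed.
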